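(* Let $G=(V,E)$ be an undirected graph with nonnegative edge weights, not necessarily planar. Let $Q$ be a shortest path in $G$, let $u\in V$, and let $\epsilon',\epsilon''>0$. Let $H$ be an undirected graph with nonnegative edge weights such that $u\in V(H)\subseteq V$ and $d_H(v_1,v_2)\ge d_G(v_1,v_2)$ for all $v_1,v_2\in V(H)$. Assume that for every $v\in V(Q)$ there is a vertex $v'\in V(H)\cap V(Q)$ with $$d_H(u,v')+d_Q(v',v)\le (1+\epsilon')\,d_G(u,v).$$ Then there is a subset $P_H\subseteq V(H)\cap V(Q)$ of size $O(1/\epsilon'')$ such that for every $v\in V(Q)$ there is a $p\in P_H$ with $$d_H(u,p)+d_Q(p,v)\le (1+\epsilon')(1+\epsilon'')\,d_G(u,v).$$
   Context: For a graph $X$ with nonnegative edge weights, $d_X(a,b)$ denotes the shortest-path distance between $a$ and $b$ in $X$. For the path $Q$, $d_Q(a,b)$ is the weight of the subpath of $Q$ between $a$ and $b$. *)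

(* Defs.v *)
From mathcomp Require Import all_boot.
From Stdlib Require Import Reals ClassicalEpsilon.

Set Implicit Arguments.
Unset Strict Implicit.
Unset Printing Implicit Defensive.

Local Open Scope R_scope.

(* Extended nonnegative values: [None] stands for +infinity. *)
Definition oadd (x y : option R) : option R :=
  match x, y with Some a, Some b => Some (a + b) | _, _ => None end.
Definition oscale (c : R) (x : option R) : option R :=
  match x with Some a => Some (c * a) | None => None end.
Definition ole (x y : option R) : Prop :=
  match x, y with
  | _, None => True
  | None, Some _ => False
  | Some a, Some b => a <= b
  end.

(* A weighted undirected graph on (a subset of) a finite vertex type V is
   given by its weight function: [w x y = Some c] iff {x,y} is an edge of
   weight c, [None] iff there is no edge. *)
Definition wgraph (V : Type) := V -> V -> option R.

Definition nonneg_sym_graph (V : Type) (w : wgraph V) : Prop :=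
  (forall x y, w x y = w y x) /\
  (forall x y c, w x y = Some c -> 0 <= c).

Definition graph_on (V : finType) (VH : {set V}) (w : wgraph V) : Prop :=
  forall x y c, w x y = Some c -> x \in VH /\ y \in VH.

Fixpoint walk_w (V : Type) (w : wgraph V) (x : V) (s : seq V) : option R :=
  match s with
  | [::] => Some 0
  | y :: s' => oadd (w x y) (walk_w w y s')
  end.

Definition walk_len (V : Type) (w : wgraph V) (a b : V) (l : R) : Prop :=
  exists s : seq V, last a s = b /\ walk_w w a s = Some l.

Definition is_dist (V : Type) (w : wgraph V) (a b : V) (d : option R) : Prop :=
  match d with
  | None => forall l, ~ walk_len w a b l
  | Some x => walk_len w a b x /\ forall l, walk_len w a b l -> x <= l
  end.

Definition gdist (V : Type) (w : wgraph V) (a b : V) : option R :=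
  epsilon (inhabits None) (is_dist w a b).

Definition is_path (V : finType) (w : wgraph V) (x0 : V) (qs : seq V) : Prop :=
  uniq (x0 :: qs) /\ exists L, walk_w w x0 qs = Some L.

Definition is_shortest_path (V : finType) (w : wgraph V) (x0 : V) (qs : seq V)
  : Prop :=
  is_path w x0 qs /\ walk_w w x0 qs = gdist w x0 (last x0 qs).

Definition qpre (V : finType) (w : wgraph V) (x0 : V) (qs : seq V) (i : nat) : R :=
  odflt 0 (walk_w w x0 (take i qs)).

Definition dQ (V : finType) (w : wgraph V) (x0 : V) (qs : seq V) (a b : V) : R :=
  Rabs (qpre w x0 qs (index b (x0 :: qs)) - qpre w x0 qs (index a (x0 :: qs))).

(* Main.v *)
Require Import Defs.
From mathcomp Require Import all_boot.
From Stdlib Require Import Reals Lra Lia ClassicalEpsilon Classical ZArith.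
Set Implicit Arguments.
Unset Strict Implicit.
Local Open Scope R_scope.

Lemma walk_cat (V : Type) (w : wgraph V) x s1 s2 :
  walk_w w x (s1 ++ s2) = oadd (walk_w w x s1) (walk_w w (last x s1) s2).
Proof.
elim: s1 x => [|y s1 IH] x /=.
  by case: (walk_w w x s2) => // a; rewrite Rplus_0_l.
rewrite IH; case: (w x y) => [a|] //; case: (walk_w w y s1) => [b|] //=;
  case: (walk_w _ _ s2) => [c|] //=; by rewrite Rplus_assoc.
Qed.

Lemma walk_nonneg (V : Type) (w : wgraph V) x s c :
  (forall x y c, w x y = Some c -> 0 <= c) -> walk_w w x s = Some c -> 0 <= c.
Proof.
move=> hw; elim: s x c => [|y s IH] x c /=; first by case=> <-; lra.
case E: (w x y) => [a|] //; case E2: (walk_w w y s) => [b|] //= [<-].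
have := hw _ _ _ E; have := IH _ _ E2; lra.
Qed.

Lemma last_rev_belast (V : Type) (y : V) s :
  last (last y s) (rev (belast y s)) = y.
Proof.
have : last y s :: rev (belast y s) = rev (y :: s) by rewrite [y :: s]lastI rev_rcons.
rewrite rev_cons => E.
have -> : last (last y s) (rev (belast y s)) = last (last y s) (last y s :: rev (belast y s)).
  by case: (rev (belast y s)).
by rewrite E last_rcons.
Qed.

Lemma walk_rev (V : Type) (w : wgraph V) x s :
  (forall x y, w x y = w y x) ->
  walk_w w x s = walk_w w (last x s) (rev (belast x s)).
Proof.
move=> hs; elim: s x => [|y s IH] x //=.
rewrite rev_cons -cats1 walk_cat -IH last_rev_belast /= hs.
case: (w y x) => [a|]; case: (walk_w w y s) => [b|] //=.
by rewrite Rplus_0_r Rplus_comm.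
Qed.

Lemma list_min (T : eqType) (l : seq T) (P : T -> Prop) (f : T -> R) :
  (exists x, x \in l /\ P x) ->
  exists x, [/\ x \in l, P x & forall y, y \in l -> P y -> f x <= f y].
Proof.
elim: l => [|a l IH]; first by case=> x [].
move=> [x0 [x0l Px0]]; case: (classic (exists x, x \in l /\ P x)) => [/IH [m [ml Pm mm]]|nE].
  case: (classic (P a /\ f a <= f m)) => [[Pa le]|nle].
    exists a; split => //; first by rewrite inE eqxx.
    move=> y; rewrite inE => /orP [/eqP -> //|yl] Py; first lra.
    have := mm y yl Py; lra.
  exists m; split => //; first by rewrite inE ml orbT.
  move=> y; rewrite inE => /orP [/eqP ->|yl] Py; last exact: mm.
  have : ~ f a <= f m by move=> h; apply: nle.
  lra.
have Pa : P a.
  move: x0l; rewrite inE => /orP [/eqP <- //|x0l].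
  by exfalso; apply: nE; exists x0.
exists a; split => //; first by rewrite inE eqxx.
move=> y; rewrite inE => /orP [/eqP -> _|yl Py]; first lra.
by exfalso; apply: nE; exists y.
Qed.

Lemma shortcut (V : finType) (w : wgraph V) x s l :
  (forall x y c, w x y = Some c -> 0 <= c) ->
  walk_w w x s = Some l ->
  exists s' l', [/\ uniq (x :: s'), last x s' = last x s,
     walk_w w x s' = Some l' & l' <= l].
Proof.
move=> hw; elim: s x l => [|y s IH] x l /=.
  by move=> h; exists [::], l; split => //; lra.
case E: (w x y) => [a|] //; case E2: (walk_w w y s) => [b|] //= [<-].
have [t [l' [ut lt wt le]]] := IH _ _ E2.
have a0 := hw _ _ _ E.
case xin: (x \in y :: t); last first.
  exists (y :: t), (a + l'); split.
  - by rewrite cons_uniq; apply/andP; split; [rewrite xin | exact: ut].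
  - by [].
  - by rewrite /= E wt.
  - lra.
move: xin; rewrite inE => /orP [/eqP ->|xt].
  by exists t, l'; split => //; lra.
move: ut lt wt; case/path.splitP: xt => p1 p2 ut lt wt.
move: wt; rewrite walk_cat last_rcons.
case E3: (walk_w w y (rcons p1 x)) => [c|] //.
case E4: (walk_w w x p2) => [d|] //= [Ed].
have c0 := walk_nonneg hw E3.
exists p2, d; split => //.
- move: ut; rewrite -cat_cons cat_uniq => /and3P [_ hn ->].
  rewrite andbT; apply/negP => xp2; move/hasP: hn; apply.
  by exists x => //; rewrite -cats1 -cat_cons mem_cat mem_seq1 eqxx orbT.
- by rewrite -lt last_cat last_rcons.
- lra.
Qed.

Fixpoint allseqs (V : finType) (n : nat) : seq (seq V) :=
  match n with
  | 0%nat => [:: [::]]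
  | n'.+1 => [::] :: [seq x :: s | x <- enum V, s <- allseqs V n']
  end.

Lemma allseqsP (V : finType) n (s : seq V) : (size s <= n)%nat -> s \in allseqs V n.
Proof.
elim: n s => [|n IH] [|x s] //=.
move=> hs; rewrite inE; apply/orP; right.
by apply: (allpairs_f (fun x s => x :: s)); [rewrite mem_enum | exact: IH].
Qed.

Lemma dist_exists (V : finType) (w : wgraph V) a b :
  (forall x y c, w x y = Some c -> 0 <= c) -> exists d, is_dist w a b d.
Proof.
move=> hw.
case: (classic (exists l, walk_len w a b l)) => [[l0 [s0 [ls0 ws0]]]|nE]; last first.
  by exists None => l hl; apply: nE; exists l.
pose P := fun s : seq V => last a s = b /\ exists x, walk_w w a s = Some x.
pose f := fun s : seq V => odflt 0 (walk_w w a s).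
have key : forall s l, last a s = b -> walk_w w a s = Some l ->
   exists s', [/\ s' \in allseqs V #|V|, P s' & f s' <= l].
  move=> s l hl hs; have [s' [l' [u' ls' ws' le]]] := shortcut hw hs.
  exists s'; split.
  - apply: allseqsP; move/card_uniqP: u' => e.
    apply: (@leq_trans (size (a :: s'))); first exact: leqnSn.
    rewrite -e; exact: max_card.
  - by split; [rewrite ls' | exists l'].
  - by rewrite /f ws'.
have [s1 [s1in Ps1 _]] := key _ _ ls0 ws0.
have [m [min Pm mm]] := list_min f (ex_intro _ s1 (conj s1in Ps1)).
case: Pm => lm [x wm].
exists (Some x); split; first by exists m.
move=> l [s [hl hs]]; have [s' [s'in Ps' le]] := key _ _ hl hs.
have := mm _ s'in Ps'; move: le; rewrite /f wm /=; lra.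
Qed.

Lemma gdist_spec (V : finType) (w : wgraph V) a b :
  (forall x y c, w x y = Some c -> 0 <= c) -> is_dist w a b (gdist w a b).
Proof.
move=> hw; rewrite /gdist; apply: epsilon_spec; exact: dist_exists.
Qed.

Definition tpos (V : finType) (w : wgraph V) x0 qs (v : V) :=
  qpre w x0 qs (index v (x0 :: qs)).

Lemma qsplit (V : finType) (w : wgraph V) x0 qs L v :
  walk_w w x0 qs = Some L -> v \in x0 :: qs ->
  [/\ walk_w w x0 (take (index v (x0 :: qs)) qs) = Some (tpos w x0 qs v),
      last x0 (take (index v (x0 :: qs)) qs) = v,
      walk_w w v (drop (index v (x0 :: qs)) qs) = Some (L - tpos w x0 qs v) &
      last v (drop (index v (x0 :: qs)) qs) = last x0 qs].
Proof.
move=> hq vin; set i := index v (x0 :: qs).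
have isz : (i <= size qs)%nat by rewrite -ltnS -[(size qs).+1]/(size (x0 :: qs)) index_mem.
have lt : last x0 (take i qs) = v.
  rewrite (last_nth x0) size_takel //.
  rewrite -[in RHS](nth_index x0 vin) -/i.
  case: i isz => [|j] isz //=.
  by rewrite nth_take.
move: hq; rewrite -[in walk_w _ _ qs](cat_take_drop i qs) walk_cat lt.
rewrite /tpos /qpre -/i.
case: (walk_w w x0 (take i qs)) => [a|] //; case: (walk_w w v (drop i qs)) => [b|] //= [<-].
split => //.
- by rewrite Rplus_comm /Rminus Rplus_assoc Rplus_opp_r Rplus_0_r.
- by rewrite -lt -last_cat cat_take_drop.
Qed.

Lemma tri (V : finType) (w : wgraph V) x0 qs u a b da db :
  nonneg_sym_graph w -> is_shortest_path w x0 qs ->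
  a \in x0 :: qs -> b \in x0 :: qs ->
  gdist w u a = Some da -> gdist w u b = Some db ->
  tpos w x0 qs b - tpos w x0 qs a <= da + db.
Proof.
move=> [hs hw] [[_ [L hL]] hsp] ain bin ga gb.
have [wa1 la1 wa2 la2] := qsplit hL ain.
have [wb1 lb1 wb2 lb2] := qsplit hL bin.
have := gdist_spec u a hw; rewrite ga => -[[sa [lsa wsa]] _].
have := gdist_spec u b hw; rewrite gb => -[[sb [lsb wsb]] _].
have := gdist_spec x0 (last x0 qs) hw; rewrite -hsp hL => -[_ mn].
have wra : walk_w w a (rev (belast u sa)) = Some da by rewrite -lsa -walk_rev.
have lra_ : last a (rev (belast u sa)) = u by rewrite -lsa last_rev_belast.
set ia := index a (x0 :: qs) in wa1 la1 wa2 la2.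
set ib := index b (x0 :: qs) in wb1 lb1 wb2 lb2.
set s := take ia qs ++ (rev (belast u sa) ++ (sb ++ drop ib qs)).
have : walk_len w x0 (last x0 qs) (tpos w x0 qs a + (da + (db + (L - tpos w x0 qs b)))).
  exists s; split.
  - by rewrite /s !last_cat la1 lra_ lsb lb2.
  - by rewrite /s !walk_cat la1 lra_ lsb wa1 wra wsb wb2.
move/mn; lra.
Qed.

Lemma sg_le_abs sg x : sg = 1 \/ sg = -1 -> sg * x <= Rabs x.
Proof.
case=> ->; first by rewrite Rmult_1_l; apply: Rle_abs.
rewrite -Rabs_Ropp; have -> : -1 * x = - x by ring.
apply: Rle_abs.
Qed.

Lemma sg_abs sg x : sg = 1 \/ sg = -1 -> 0 <= sg * x -> Rabs x = sg * x.
Proof.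
case=> -> h.
  by rewrite Rabs_pos_eq; lra.
by rewrite Rabs_left1; lra.
Qed.

Lemma floor_ex x : 0 <= x -> exists j : nat, INR j <= x /\ x < INR j + 1.
Proof.
move=> hx; have [h1 h2] := archimed x.
have hp : (0 < up x)%Z by apply: lt_IZR; lra.
exists (Z.to_nat (up x - 1)).
rewrite INR_IZR_INZ Z2Nat.id; last lia.
rewrite minus_IZR /=; lra.
Qed.

Lemma side (T : eqType) (l : seq T) (P : T -> Prop) (t d : T -> R) (v0 : T)
  (D e1 e2 sg : R) :
  0 < e1 -> 0 < e2 -> 0 <= D -> v0 \in l -> P v0 ->
  sg = 1 \/ sg = -1 ->
  (forall w, w \in l -> P w -> D <= d w) ->
  (forall w, w \in l -> P w -> Rabs (t w - t v0) <= D + d w) ->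
  exists pl : seq T, [/\ (forall x, x \in pl -> x \in l /\ P x),
    INR (size pl) <= 2 / e2 + 1 &
    forall w, w \in l -> P w -> 0 <= sg * (t w - t v0) ->
      (1 + e1) * d w - sg * (t w - t v0) < (1 + e1) * D ->
      exists2 v, v \in pl &
        (1 + e1) * d v + Rabs (t w - t v) <= (1 + e1) * (1 + e2) * d w].
Proof.
move=> he1 he2 hD v0l Pv0 hsg hmin htri.
have beta_lb : forall w, w \in l -> P w ->
    - ((1 + e1) * D) <= (1 + e1) * d w - sg * (t w - t v0).
  move=> w wl Pw; have := htri w wl Pw; have := sg_le_abs (t w - t v0) hsg.
  have := hmin w wl Pw; nra.
case: (Rle_lt_or_eq_dec 0 D hD) => [Dpos|D0]; last first.
  exists [::]; split => //=.
    have : 0 < 2 / e2 by apply: Rdiv_lt_0_compat; lra.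
    lra.
  move=> w wl Pw _; have := beta_lb w wl Pw; rewrite -D0 => h1 h2; exfalso; lra.
pose M := (1 + e1) * D.
pose del := e2 * M.
have Mpos : 0 < M by rewrite /M; nra.
have delpos : 0 < del by rewrite /del; nra.
pose beta := fun w => (1 + e1) * d w - sg * (t w - t v0).
pose strip := fun (j : nat) w => [/\ w \in l, P w, 0 <= sg * (t w - t v0),
   - M + INR j * del <= beta w & beta w < - M + (INR j + 1) * del].
pose Rep := fun (j : nat) v => [/\ v \in l, P v & (exists x, strip j x) ->
   strip j v /\ forall y, strip j y -> sg * (t v - t v0) <= sg * (t y - t v0)].
have Repex : forall j, exists v, Rep j v.
  move=> j; case: (classic (exists x, strip j x)) => [[x sx]|nE]; last first.
    by exists v0; split.
  have [m [ml [ml' Pm s0 b1 b2] mm]] :=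
    list_min (fun v => sg * (t v - t v0)) (ex_intro _ x (conj (let: And5 h _ _ _ _ := sx in h) sx)).
  exists m; split => // _; split; first by split.
  by move=> y sy; apply: mm => //; case: sy.
pose rep := fun j => epsilon (inhabits v0) (Rep j).
have repP : forall j, Rep j (rep j) by move=> j; apply: epsilon_spec; apply: Repex.
pose N := Z.to_nat (up (2 / e2)).
have [u1 u2] := archimed (2 / e2).
have e2inv : 0 < 2 / e2 by apply: Rdiv_lt_0_compat; lra.
have INRN : INR N = IZR (up (2 / e2)).
  rewrite /N INR_IZR_INZ Z2Nat.id //; apply: Z.lt_le_incl; apply: lt_IZR; lra.
exists (map rep (iota 0 N)); split.
- move=> x /mapP [j _ ->]; by case: (repP j).
- rewrite size_map size_iota INRN; lra.
move=> w wl Pw hs hb.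
have bl := beta_lb w wl Pw.
set x := (beta w + M) / del.
have x0 : 0 <= x.
  rewrite /x /Rdiv; apply: Rmult_le_pos; first by rewrite /beta /M; lra.
  by apply: Rlt_le; apply: Rinv_0_lt_compat.
have [j [jl ju]] := floor_ex x0.
have xdel : x * del = beta w + M by rewrite /x; field; lra.
have sw : strip j w.
  split => //.
  - have := Rmult_le_compat_r del _ _ (Rlt_le _ _ delpos) jl; lra.
  - have := Rmult_lt_compat_r del _ _ delpos ju; lra.
have jN : (j < N)%nat.
  apply/ltP; apply: INR_lt; rewrite INRN.
  have : x < 2 / e2.
    rewrite /x /Rdiv; apply: (Rmult_lt_reg_r del) => //.
    rewrite Rmult_assoc Rinv_l; last lra.
    have -> : 2 * / e2 * del = 2 * M by rewrite /del; field; lra.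
    rewrite /beta in hb *; rewrite /M; lra.
  lra.
case: (repP j) => _ _ /(_ (ex_intro _ w sw)) [[vl Pv hv0 bv1 bv2] vmin].
exists (rep j); first by apply/mapP; exists j => //; rewrite mem_iota add0n jN.
have hvm := vmin w sw.
rewrite (@sg_abs sg); last by [|lra]; last exact: hsg.
have hDw := hmin w wl Pw.
have : del <= e2 * ((1 + e1) * d w).
  rewrite /del /M; apply: Rmult_le_compat_l; [lra|]; apply: Rmult_le_compat_l; lra.
move: bv2; rewrite /beta /strip in sw *; case: sw => _ _ _ sw1 _.
move: sw1; rewrite /beta => sw1 bv2 hdel.
nra.
Qed.

Lemma select (T : eqType) (l : seq T) (P : T -> Prop) (t d : T -> R) (e1 e2 : R) :
  0 < e1 -> 0 < e2 ->
  (forall w, w \in l -> P w -> 0 <= d w) ->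
  (forall a b, a \in l -> b \in l -> P a -> P b -> t b - t a <= d a + d b) ->
  exists pl : seq T, [/\ (forall x, x \in pl -> x \in l /\ P x),
    INR (size pl) <= 3 + 4 / e2 &
    forall w, w \in l -> P w ->
      exists2 v, v \in pl &
        (1 + e1) * d v + Rabs (t w - t v) <= (1 + e1) * (1 + e2) * d w].
Proof.
move=> he1 he2 hnn htr.
have e2inv : 0 < 2 / e2 by apply: Rdiv_lt_0_compat; lra.
have -> : 4 / e2 = 2 * (2 / e2) by rewrite /Rdiv; ring.
case: (classic (exists x, x \in l /\ P x)) => [ex|nE]; last first.
  exists [::]; split => //=; first lra.
  by move=> w wl Pw; exfalso; apply: nE; exists w.
have [v0 [v0l Pv0 mn]] := list_min d ex.
set D := d v0.
have hD : 0 <= D by apply: hnn.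
have hmin : forall w, w \in l -> P w -> D <= d w by move=> w wl Pw; apply: mn.
have htri : forall w, w \in l -> P w -> Rabs (t w - t v0) <= D + d w.
  move=> w wl Pw; apply: Rabs_le; split.
  - have := htr w v0 wl v0l Pw Pv0; rewrite /D; lra.
  - have := htr v0 w v0l wl Pv0 Pw; rewrite /D; lra.
have [plR [plRP plRs plRc]] := side he1 he2 hD v0l Pv0 (or_introl erefl) hmin htri.
have [plL [plLP plLs plLc]] := side he1 he2 hD v0l Pv0 (or_intror erefl) hmin htri.
exists (v0 :: plR ++ plL); split.
- move=> x; rewrite inE mem_cat => /orP [/eqP ->|/orP [/plRP|/plLP]] //.
- rewrite [size _]/= S_INR size_cat plus_INR; lra.
move=> w wl Pw.
have dw0 := hnn w wl Pw.
case: (Rle_or_lt ((1 + e1) * D) ((1 + e1) * d w - Rabs (t w - t v0))) => hb.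
  exists v0; first by rewrite inE eqxx.
  have h0 : 0 <= e2 * ((1 + e1) * d w).
    apply: Rmult_le_pos; [lra|apply: Rmult_le_pos; lra].
  rewrite -/D; lra.
case: (Rle_or_lt 0 (t w - t v0)) => hs.
  have ea : Rabs (t w - t v0) = 1 * (t w - t v0) by rewrite Rabs_pos_eq; lra.
  rewrite ea in hb.
  have [v vin hv] := plRc w wl Pw ltac:(lra) hb.
  by exists v => //; rewrite inE mem_cat vin orbT.
have ea : Rabs (t w - t v0) = -1 * (t w - t v0) by rewrite Rabs_left; lra.
rewrite ea in hb.
have [v vin hv] := plLc w wl Pw ltac:(lra) hb.
by exists v => //; rewrite inE mem_cat vin !orbT.
Qed.

Theorem lemma2 :
  exists C : R, 0 < C /\
  forall (V : finType) (wG : wgraph V) (x0 : V) (qs : seq V) (u : V)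
         (eps1 eps2 : R) (VH : {set V}) (wH : wgraph V),
    nonneg_sym_graph wG ->
    is_shortest_path wG x0 qs ->
    0 < eps1 -> 0 < eps2 ->
    nonneg_sym_graph wH -> graph_on VH wH ->
    u \in VH ->
    (forall v1 v2, v1 \in VH -> v2 \in VH ->
        ole (gdist wG v1 v2) (gdist wH v1 v2)) ->
    (forall v, v \in x0 :: qs ->
        exists v', [/\ v' \in VH, v' \in x0 :: qs &
          ole (oadd (gdist wH u v') (Some (dQ wG x0 qs v' v)))
              (oscale (1 + eps1) (gdist wG u v))]) ->
    exists PH : {set V},
      [/\ PH \subset VH, {subset PH <= x0 :: qs},
          INR #|PH| <= C * (1 + / eps2) &
          forall v, v \in x0 :: qs ->
            exists2 p, p \in PH &
              ole (oadd (gdist wH u p) (Some (dQ wG x0 qs p v)))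
                  (oscale ((1 + eps1) * (1 + eps2)) (gdist wG u v))].
Proof.
exists 4; split; first lra.
move=> V wG x0 qs u e1 e2 VH wH hG hsp he1 he2 _ _ uVH _ hport.
pose f := fun v => epsilon (inhabits x0) (fun v' => [/\ v' \in VH, v' \in x0 :: qs &
  ole (oadd (gdist wH u v') (Some (dQ wG x0 qs v' v))) (oscale (1 + e1) (gdist wG u v))]).
have fP : forall v, v \in x0 :: qs -> [/\ f v \in VH, f v \in x0 :: qs &
  ole (oadd (gdist wH u (f v)) (Some (dQ wG x0 qs (f v) v))) (oscale (1 + e1) (gdist wG u v))].
  by move=> v vQ; exact: (epsilon_spec (inhabits x0) _ (hport v vQ)).
pose P := fun v => exists x, gdist wG u v = Some x.
pose d := fun v => odflt 0 (gdist wG u v).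
pose t := tpos wG x0 qs.
have hw := proj2 hG.
have hnn : forall w, w \in x0 :: qs -> P w -> 0 <= d w.
  move=> w _ [x E]; rewrite /d E /=.
  have := gdist_spec u w hw; rewrite E => -[[s [_ ws]] _].
  exact: walk_nonneg hw ws.
have htr : forall a b, a \in x0 :: qs -> b \in x0 :: qs -> P a -> P b ->
    t b - t a <= d a + d b.
  move=> a b aQ bQ [xa Ea] [xb Eb]; rewrite /d Ea Eb /=.
  exact: tri hG hsp aQ bQ Ea Eb.
have [pl [plP pls plc]] := select he1 he2 hnn htr.
have x0Q : x0 \in x0 :: qs by rewrite mem_head.
exists [set x in f x0 :: map f pl | (x \in VH) && (x \in x0 :: qs)]; split.
- by apply/subsetP => x; rewrite inE => /andP [_ /andP [] ].
- by move=> x; rewrite inE => /andP [_ /andP [_ ->]].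
- have hc : (#|[set x in f x0 :: map f pl | (x \in VH) && (x \in x0 :: qs)]|
             <= size (f x0 :: map f pl))%nat.
    apply: leq_trans (card_size _); apply: subset_leq_card.
    by apply/subsetP => x; rewrite inE => /andP [].
  have hc2 := le_INR _ _ (elimT leP hc); apply: Rle_trans hc2 _.
  rewrite [size _]/= S_INR size_map.
  have -> : 4 * (1 + / e2) = 1 + 3 + 4 / e2 by rewrite /Rdiv; ring.
  set n := size pl in pls *; lra.
move=> v vQ.
case E: (gdist wG u v) => [y|]; last first.
  case: (fP x0 x0Q) => h1 h2 _.
  exists (f x0); first by rewrite inE h1 h2 mem_head.
  by case: (oadd _ _).
have [v' v'pl hv'] := plc v vQ (ex_intro _ y E).
have [v'Q [y' E']] := plP v' v'pl.
case: (fP v' v'Q) => h1 h2.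
rewrite E' /=.
case Eh: (gdist wH u (f v')) => [h|] //= hh.
exists (f v'); first by rewrite inE h1 h2 /= in_cons map_f ?orbT.
rewrite Eh /=.
move: hv'; rewrite /d E E' /= => hv'.
have := Rabs_triang (t v - t v') (t v' - t (f v')).
have -> : t v - t v' + (t v' - t (f v')) = t v - t (f v') by ring.
rewrite /dQ in hh *; rewrite /t /tpos in hv' *.
lra.
Qed.
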